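(* Let $f:\mathbf{R}\to\mathbf{R}$ be additive. Then $f$ is everywhere surjective if and only if $f$ is surjective and not injective.
   Context: A function $f:\mathbf{R}\to\mathbf{R}$ is additive if $f(x+y)=f(x)+f(y)$ for all $x,y\in\mathbf{R}$. It is everywhere surjective if for every open interval $(a,b)$ with $a<b$ and every $y\in\mathbf{R}$ there exists $x\in(a,b)$ with $f(x)=y$. *)

(* Defs.v *)
From Stdlib Require Import Reals.
Open Scope R_scope.

Definition additive (f : R -> R) : Prop :=
  forall x y : R, f (x + y) = f x + f y.

Definition everywhere_surjective (f : R -> R) : Prop :=
  forall a b : R, a < b -> forall y : R, exists x : R, a < x < b /\ f x = y.

Definition surjective (f : R -> R) : Prop := forall y : R, exists x : R, f x = y.

Definition injective (f : R -> R) : Prop := forall x y : R, f x = f y -> x = y.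

(* Main.v *)
Require Import Defs.
From Stdlib Require Import Reals Lra Lia Classical.
Open Scope R_scope.

Lemma add0 f : additive f -> f 0 = 0.
Proof. intros h. pose proof (h 0 0). rewrite Rplus_0_r in H. lra. Qed.

Lemma addN f : additive f -> forall x, f (- x) = - f x.
Proof. intros h x. pose proof (h x (-x)). rewrite Rplus_opp_r, add0 in H; auto. lra. Qed.

Lemma addn f : additive f -> forall n w, f (INR n * w) = INR n * f w.
Proof.
  intros h n w; induction n.
  - simpl. rewrite Rmult_0_l, add0; auto; ring.
  - rewrite S_INR, Rmult_plus_distr_r, Rmult_1_l, h, IHn. ring.
Qed.

Lemma addz f : additive f -> forall k w, f w = 0 -> f (IZR k * w) = 0.
Proof.
  intros h k w hw. destruct k.
  - simpl. rewrite Rmult_0_l; apply add0; auto.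
  - rewrite <- Znat.positive_nat_Z, <- INR_IZR_INZ, addn, hw; auto; ring.
  - rewrite <- Pos2Z.opp_pos, opp_IZR, <- Znat.positive_nat_Z, <- INR_IZR_INZ, Ropp_mult_distr_l_reverse, addN, addn, hw; auto; ring.
Qed.

Theorem mainTheorem9 (f : R -> R) (hf : additive f) :
  everywhere_surjective f <-> (surjective f /\ ~ injective f).
Proof.
  split.
  - intros H. split.
    + intros y. destruct (H 0 1 ltac:(lra) y) as [x [_ hx]]. eauto.
    + intros Hi. destruct (H 1 2 ltac:(lra) 0) as [x [hx1 hx2]].
      assert (x = 0) by (apply Hi; rewrite hx2, add0; auto). lra.
  - intros [Hs Hni] a b hab y.
    assert (exists z, 0 < z /\ f z = 0) as [z [hz0 hz]].
    { destruct (not_all_ex_not _ _ Hni) as [u hu].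
      destruct (not_all_ex_not _ _ hu) as [v hv].
      apply imply_to_and in hv as [e ne].
      assert (f (u - v) = 0).
      { unfold Rminus. rewrite hf, addN, e; auto; ring. }
      destruct (Rlt_or_le 0 (u - v)).
      - exists (u - v); auto.
      - exists (- (u - v)). split. lra. rewrite addN, H; auto; ring. }
    destruct (Hs y) as [x0 hx0].
    destruct (archimed (z / (b - a))) as [hup _].
    set (n := Z.to_nat (up (z / (b - a)))).
    assert (hn : z / (b - a) < INR n).
    { unfold n. rewrite INR_IZR_INZ, Znat.Z2Nat.id; auto.
      apply le_IZR. assert (0 < z / (b - a)) by (apply Rdiv_lt_0_compat; lra). lra. }
    assert (hnpos : 0 < INR n).
    { assert (0 < z / (b - a)) by (apply Rdiv_lt_0_compat; lra). lra. }
    set (w := z / INR n).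
    assert (hw0 : 0 < w) by (unfold w; apply Rdiv_lt_0_compat; lra).
    assert (hwba : w < b - a).
    { assert (z < INR n * (b - a)).
      { replace z with (z / (b - a) * (b - a)) by (field; lra).
        apply Rmult_lt_compat_r; lra. }
      unfold w. apply (Rmult_lt_reg_r (INR n)); auto.
      replace (z / INR n * INR n) with z by (field; lra). lra. }
    assert (hfw : f w = 0).
    { pose proof (addn f hf n w) as E. unfold w in E at 1.
      replace (INR n * (z / INR n)) with z in E by (field; lra).
      rewrite hz in E. symmetry in E. apply Rmult_integral in E as [E|E]; lra. }
    destruct (archimed ((a - x0) / w)) as [h1 h2].
    set (k := up ((a - x0) / w)) in *.
    exists (x0 + IZR k * w). split.
    + assert ((a - x0) / w * w = a - x0) by (field; lra).
      assert ((a - x0) / w * w < IZR k * w) by (apply Rmult_lt_compat_r; lra).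
      assert (IZR k * w <= ((a - x0) / w + 1) * w) by (apply Rmult_le_compat_r; lra).
      assert (((a - x0) / w + 1) * w = a - x0 + w) by (field; lra).
      lra.
    + rewrite hf, addz; auto. rewrite hx0; ring.
Qed.
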